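(* Let $n\geq 1$. The assignment $\rho_i\mapsto\sigma_1\sigma_2\cdots\sigma_i$ ($1\leq i\leq n$) extends to a surjective group homomorphism from the group $\langle \rho_1,\dots,\rho_n\mid \rho_1\rho_n\rho_i=\rho_{i+1}\rho_n,\ 1\leq i\leq n-1\rangle$ (isomorphic to $G(n,n+1)$) onto the braid group $\mathcal{B}_{n+1}$.
   Context: $\mathcal{B}_{n+1}$ is the braid group with generators $\sigma_1,\dots,\sigma_n$ and relations $\sigma_i\sigma_{i+1}\sigma_i=\sigma_{i+1}\sigma_i\sigma_{i+1}$ for $1\leq i<n$ and $\sigma_i\sigma_j=\sigma_j\sigma_i$ for $|i-j|>1$. *)

(* Defs.v *)
From mathcomp Require Import all_boot.
Set Implicit Arguments. Unset Strict Implicit. Unset Printing Implicit Defensive.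

(* A letter is a generator together with an "inverse" flag (true = inverse). *)
Definition word (T : Type) := seq (T * bool).

Definition inv_letter (T : Type) (x : T * bool) : T * bool := (x.1, ~~ x.2).
Definition inv_word (T : Type) (w : word T) : word T := rev (map (@inv_letter T) w).

(* Equality in the group <T | rels>: the congruence on words generated by
   free cancellation and the relations l = r for rels l r. *)
Inductive peq (T : Type) (rels : word T -> word T -> Prop) : word T -> word T -> Prop :=
| peq_refl w : peq rels w w
| peq_sym w1 w2 : peq rels w1 w2 -> peq rels w2 w1
| peq_trans w1 w2 w3 : peq rels w1 w2 -> peq rels w2 w3 -> peq rels w1 w3
| peq_cancel u v x : peq rels (u ++ x :: inv_letter x :: v) (u ++ v)
| peq_rel u v l r : rels l r -> peq rels (u ++ l ++ v) (u ++ r ++ v).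

Definition gen (T : Type) (i : T) : T * bool := (i, false).

(* Braid group B_{n+1}: generators sigma_1..sigma_n, here indexed by 'I_n
   (index k stands for sigma_{k+1}). *)
Definition braid_rel (n : nat) (l r : word 'I_n) : Prop :=
  (exists i j : 'I_n, val j = (val i).+1 /\
      l = [:: gen i; gen j; gen i] /\ r = [:: gen j; gen i; gen j])
  \/ (exists i j : 'I_n, ((val i).+1 < val j \/ (val j).+1 < val i) /\
      l = [:: gen i; gen j] /\ r = [:: gen j; gen i]).

(* The group <rho_1..rho_n | rho_1 rho_n rho_i = rho_{i+1} rho_n, 1<=i<=n-1>,
   rho_{k+1} indexed by k : 'I_n. *)
Definition G_rel (n : nat) (l r : word 'I_n) : Prop :=
  exists i j k0 km : 'I_n,
    [/\ val k0 = 0, val km = n.-1, val j = (val i).+1,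
        l = [:: gen k0; gen km; gen i] & r = [:: gen j; gen km]].

Definition rho_img (n : nat) (k : 'I_n) : word 'I_n :=
  [seq gen j | j <- enum 'I_n & val j <= val k].

Definition letter_img (n : nat) (x : 'I_n * bool) : word 'I_n :=
  if x.2 then inv_word (rho_img x.1) else rho_img x.1.

Definition phi (n : nat) (w : word 'I_n) : word 'I_n := flatten (map (@letter_img n) w).

(* Main.v *)
Require Import Defs.
From mathcomp Require Import all_boot.
Set Implicit Arguments. Unset Strict Implicit. Unset Printing Implicit Defensive.

Lemma peq_ctx (T : Type) (R : word T -> word T -> Prop) (a b : word T) u v :
  peq R a b -> peq R (u ++ a ++ v) (u ++ b ++ v).
Proof.
move=> H; elim: H u v => {a b}.
- move=> w u v; exact: peq_refl.
- move=> w1 w2 _ IH u v; exact: peq_sym.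
- move=> w1 w2 w3 _ IH1 _ IH2 u v; exact: peq_trans (IH1 u v) (IH2 u v).
- move=> u' v' x u v; have H := peq_cancel R (u ++ u') (v' ++ v) x.
  by rewrite -!catA /= in H *.
- move=> u' v' l r Hr u v; have H := peq_rel (u ++ u') (v' ++ v) Hr.
  by rewrite -!catA /= in H *.
Qed.

Lemma peq_cat (T : Type) (R : word T -> word T -> Prop) (a b c d : word T) :
  peq R a b -> peq R c d -> peq R (a ++ c) (b ++ d).
Proof.
move=> H1 H2; apply: (peq_trans (w2 := b ++ c)).
- by have := peq_ctx [::] c H1.
- by have := peq_ctx b [::] H2; rewrite !cats0.
Qed.

Lemma inv_wordK (T : Type) (w : word T) : inv_word (inv_word w) = w.
Proof.
rewrite /inv_word map_rev revK -map_comp.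
rewrite -[RHS]map_id; apply: eq_map => -[a b] /=; by rewrite /inv_letter /= negbK.
Qed.

Lemma inv_word_cat (T : Type) (a b : word T) : inv_word (a ++ b) = inv_word b ++ inv_word a.
Proof. by rewrite /inv_word map_cat rev_cat. Qed.

Lemma cat_inv (T : Type) (R : word T -> word T -> Prop) (w : word T) :
  peq R (w ++ inv_word w) [::].
Proof.
elim: w => [|x w IH] /=; first exact: peq_refl.
have -> : inv_word (x :: w) = inv_word w ++ [:: inv_letter x].
  by rewrite /inv_word /= rev_cons cats1.
apply: (peq_trans (w2 := [:: x] ++ [::] ++ [:: inv_letter x])).
  have := peq_ctx [:: x] [:: inv_letter x] IH; by rewrite /= catA.
exact: (peq_cancel R [::] [::] x).
Qed.

Lemma inv_cat (T : Type) (R : word T -> word T -> Prop) (w : word T) :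
  peq R (inv_word w ++ w) [::].
Proof. by have := cat_inv R (inv_word w); rewrite inv_wordK. Qed.

Lemma phi_cat n (a b : word 'I_n) : phi (a ++ b) = phi a ++ phi b.
Proof. by rewrite /phi map_cat flatten_cat. Qed.

Lemma comm_seq (T : Type) (R : word T -> word T -> Prop) (f : nat -> T * bool) x m :
  forall a, (forall j, a <= j < a + m -> peq R [:: f j; x] [:: x; f j]) ->
  peq R (map f (iota a m) ++ [:: x]) (x :: map f (iota a m)).
Proof.
elim: m => [|m IH] a H /=; first exact: peq_refl.
apply: (peq_trans (w2 := [:: f a] ++ (x :: map f (iota a.+1 m)))).
  have IH' := IH a.+1 _.
  have := peq_ctx [:: f a] [::] (IH' _); rewrite !cats0 /=; apply.
  move=> j /andP [h1 h2]; apply: H; apply/andP; split.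
    exact: ltnW. by rewrite addnS -addSn.
have Ha : peq R [:: f a; x] [:: x; f a].
  by apply: H; rewrite leqnn /= addnS ltnS leq_addr.
exact: (peq_ctx [::] _ Ha).
Qed.

Definition sg n' (j : nat) : 'I_n'.+1 * bool := gen (inord j).
Definition P n' a m := map (@sg n') (iota a m).

Lemma sgE n' (o : 'I_n'.+1) : sg n' o = gen o.
Proof. by rewrite /sg inord_val. Qed.

Lemma rho_img_P n' (k : 'I_n'.+1) : rho_img k = P n' 0 k.+1.
Proof.
have -> : rho_img k = map (@sg n') (map val [seq j <- enum 'I_n'.+1 | val j <= val k]).
  rewrite /rho_img -map_comp; apply: eq_map => j /=; by rewrite sgE.
rewrite /P; congr map.
have := filter_map val (fun x => x <= val k) (enum 'I_n'.+1).
rewrite val_enum_ord => <-.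
case: k => kk hK; change (filter (fun x => x <= kk) (iota 0 n'.+1) = iota 0 kk.+1).
have eN : n'.+1 = kk.+1 + (n'.+1 - kk.+1) by rewrite subnKC.
rewrite {1}eN iotaD filter_cat.
rewrite (@eq_in_filter _ _ predT (iota 0 kk.+1)); last first.
  by move=> x; rewrite mem_iota add0n.
rewrite filter_predT (@eq_in_filter _ _ pred0); last first.
  by move=> x; rewrite mem_iota add0n /= => /andP [h _]; rewrite leqNgt h.
by rewrite filter_pred0 cats0.
Qed.

From mathcomp Require Import zify.

Lemma sg_val n' j : j < n'.+1 -> val (inord j : 'I_n'.+1) = j.
Proof. exact: inordK. Qed.

Lemma comm2 n' a b : a < n'.+1 -> b < n'.+1 -> (a.+1 < b \/ b.+1 < a) ->
  peq (@braid_rel n'.+1) [:: sg n' a; sg n' b] [:: sg n' b; sg n' a].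
Proof.
move=> ha hb hab.
have := peq_rel [::] [::] (l := [:: sg n' a; sg n' b]) (r := [:: sg n' b; sg n' a]) (rels := @braid_rel n'.+1).
rewrite /=; apply; right; exists (inord a), (inord b).
by rewrite !sg_val.
Qed.

Lemma braid3 n' a : a.+1 < n'.+1 ->
  peq (@braid_rel n'.+1) [:: sg n' a; sg n' a.+1; sg n' a] [:: sg n' a.+1; sg n' a; sg n' a.+1].
Proof.
move=> ha.
have := peq_rel [::] [::] (l := [:: sg n' a; sg n' a.+1; sg n' a]) (r := [:: sg n' a.+1; sg n' a; sg n' a.+1]) (rels := @braid_rel n'.+1).
rewrite /=; apply; left; exists (inord a), (inord a.+1).
rewrite !sg_val //; exact: ltnW.
Qed.

Lemma shift1 n' k : k.+1 < n'.+1 ->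
  peq (@braid_rel n'.+1) (P n' 0 n'.+1 ++ [:: sg n' k]) ([:: sg n' k.+1] ++ P n' 0 n'.+1).
Proof.
move=> hk.
have eN : n'.+1 = k + (n'.+1 - k.+2).+2 by lia.
have -> : P n' 0 n'.+1 = P n' 0 k ++ [:: sg n' k; sg n' k.+1] ++ P n' k.+2 (n'.+1 - k.+2).
  by rewrite /P [in iota 0 n'.+1]eN iotaD map_cat add0n.
set r := P n' k.+2 _.
have Hr : peq (@braid_rel n'.+1) (r ++ [:: sg n' k]) (sg n' k :: r).
  apply: comm_seq => j /andP [h1 h2].
  apply: comm2; lia.
have Hl : peq (@braid_rel n'.+1) (P n' 0 k ++ [:: sg n' k.+1]) (sg n' k.+1 :: P n' 0 k).
  apply: comm_seq => j /andP [h1 h2].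
  apply: comm2; lia.
apply: (peq_trans (w2 := P n' 0 k ++ [:: sg n' k; sg n' k.+1; sg n' k] ++ r)).
  rewrite -!catA; apply: peq_cat; first exact: peq_refl.
  have := peq_ctx [:: sg n' k; sg n' k.+1] [::] Hr; rewrite !cats0 /=; apply.
apply: (peq_trans (w2 := P n' 0 k ++ [:: sg n' k.+1; sg n' k; sg n' k.+1] ++ r)).
  exact: peq_ctx (braid3 hk).
have := peq_ctx [::] ([:: sg n' k; sg n' k.+1] ++ r) Hl.
by rewrite /= -!catA.
Qed.

Lemma shiftP n' m : m < n'.+1 ->
  peq (@braid_rel n'.+1) (P n' 0 n'.+1 ++ P n' 0 m) (P n' 1 m ++ P n' 0 n'.+1).
Proof.
elim: m => [|m IH] hm.
  rewrite /P /= cats0; exact: peq_refl.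
have e1 : P n' 0 m.+1 = P n' 0 m ++ [:: sg n' m] by rewrite /P -[m.+1]addn1 iotaD map_cat.
have e2 : P n' 1 m.+1 = P n' 1 m ++ [:: sg n' m.+1].
  rewrite /P -[m.+1]addn1 iotaD map_cat. by rewrite add1n addn1.
rewrite e1 e2.
apply: (peq_trans (w2 := (P n' 1 m ++ P n' 0 n'.+1) ++ [:: sg n' m])).
  rewrite catA; apply: peq_cat; [apply: IH; exact: ltnW | exact: peq_refl].
rewrite -!catA; apply: peq_cat; first exact: peq_refl.
exact: shift1.
Qed.

Lemma rel_ok n' (l r : word 'I_n'.+1) : G_rel l r -> peq (@braid_rel n'.+1) (phi l) (phi r).
Proof.
case=> i [j [k0 [km [h0 hm hj -> ->]]]].
rewrite /phi /= !cats0 /letter_img /= !rho_img_P h0 hm hj /=.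
have hi : (val i).+1 < n'.+1 by rewrite -hj ltn_ord.
have := peq_ctx [:: sg n' 0] [::] (shiftP hi).
by rewrite /= !cats0.
Qed.

Lemma letter_cancel n (x : 'I_n * bool) :
  peq (@braid_rel n) (letter_img x ++ letter_img (inv_letter x)) [::].
Proof.
case: x => o [] /=; rewrite /letter_img /=.
  exact: inv_cat.
exact: cat_inv.
Qed.

Theorem proposition4p3 (n : nat) (hn : 1 <= n) :
  (forall w1 w2 : word 'I_n,
      peq (@G_rel n) w1 w2 -> peq (@braid_rel n) (phi w1) (phi w2)) /\
  (forall v : word 'I_n, exists w : word 'I_n, peq (@braid_rel n) (phi w) v).
Proof.
case: n hn => // n' _; split.
  move=> w1 w2; elim=> {w1 w2}.
  - move=> w; exact: peq_refl.
  - move=> w1 w2 _ IH; exact: peq_sym.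
  - move=> w1 w2 w3 _ IH1 _ IH2; exact: peq_trans IH1 IH2.
  - move=> u v x; rewrite !phi_cat /phi /= -/(phi v) catA.
    have := peq_ctx (phi u) (phi v) (letter_cancel x).
    by rewrite /= -!catA.
  - move=> u v l r Hr; rewrite !phi_cat; exact: peq_ctx (rel_ok Hr).
elim=> [|x v [w IH]]; first by exists [::]; exact: peq_refl.
suff [wx Hx] : exists wx, peq (@braid_rel n'.+1) (phi wx) [:: x].
  exists (wx ++ w); rewrite phi_cat; exact: peq_cat Hx IH.
case: x => o b.
case eo: (val o) => [|j].
  exists [:: (o, b)]; rewrite /phi /= cats0 /letter_img /= rho_img_P eo /P /=.
  rewrite -eo sgE; case: b; exact: peq_refl.
have hj : j < n'.+1 by rewrite ltnW // -eo ltn_ord.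
have ej : val (inord j : 'I_n'.+1) = j by rewrite sg_val.
have eP : P n' 0 j.+2 = P n' 0 j.+1 ++ [:: sg n' j.+1]
  by rewrite /P -[j.+2]addn1 iotaD map_cat.
have es : sg n' j.+1 = gen o by rewrite -eo sgE.
case: b.
  exists [:: (o, true); (inord j, false)].
  rewrite /phi /= cats0 /letter_img /= !rho_img_P eo ej eP inv_word_cat es.
  have := peq_ctx [:: (o, true)] [::] (inv_cat (braid_rel (n:=n'.+1)) (P n' 0 j.+1)).
  have -> : inv_word [:: gen o] = [:: (o, true)] by [].
  by rewrite -catA !cats0.
exists [:: (inord j, true); (o, false)].
rewrite /phi /= cats0 /letter_img /= !rho_img_P eo ej eP es catA.
have := peq_ctx [::] [:: gen o] (inv_cat (braid_rel (n:=n'.+1)) (P n' 0 j.+1)).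
by rewrite /=.
Qed.
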